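(* Let $\Theta\subseteq F(V)$ be a $\mathrm{q}\L^{*}$-theory. Then $[\Theta]_\sim=\{[p]_\sim\in[F(V)]_\sim: p\in\Theta\}$ is a filter of the MV*-algebra $\langle [F(V)]_\sim;\oplus,-,[0]_\sim,[1]_\sim\rangle$, where $-[p]_\sim=[\neg p]_\sim$, $[p]_\sim\oplus[q]_\sim=[\neg p\to q]_\sim$ and $[0]_\sim=[p\to p]_\sim$.
   Context: Let $V=\{p_1,p_2,\ldots\}$ be a set of propositional variables and $F(V)$ the set of formulas built from $V$ and the constant $1$ with the binary connective $\to$ and the unary connectives $\neg$, ${}^{+}$, ${}^{-}$ (postfix ${}^+,{}^-$ bind tighter than $\neg$, which binds tighter than $\to$). Abbreviations: $p\vee q:=((p^{+}\to q^{+})^{+}\to(\neg p)^{-})\to((q^{-}\to p^{-})^{-}\to p^{-})$; an axiom written $A\leftrightarrow B$ stands for the two axioms $A\to B$ and $B\to A$. Axiom schemas of $\mathrm{q}\L^{*}$ (for all formulas $p,q,r$): (Q1) $(p\to q)\leftrightarrow(\neg q\to\neg p)$; (Q2) $1\leftrightarrow((1\to p)\to 1)$; (Q3) $p\leftrightarrow((q\to q)\to p)$; (Q4) $(p\to q)\leftrightarrow((q^{+}\to p^{-})\to(p^{+}\to q^{-}))$; (Q5) $\neg(p\to q)\leftrightarrow(q\to p)$; (Q6) $(p\to(\neg p\to q))^{+}\leftrightarrow(p^{+}\to(\neg p^{+}\to q^{+}))$; (Q7) $(p\to(q\vee r))\leftrightarrow((p\to r)\vee(p\to q))$; (Q8)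 $(p\vee(q\vee r))\leftrightarrow((p\vee q)\vee r)$; (Q9) $((p\to 1)\to((q\to 1)\to r))\to((q\to 1)\to((p\to 1)\to r))$; (Q10) $p\to 1$; (Q11) $((1\to 1)\to p^{+})\leftrightarrow((p\to 1)\to 1)$ and $((1\to 1)\to p^{-})\leftrightarrow((p\to\neg 1)\to\neg 1)$. Deduction rules: (R1) from $p$ and $p\to q$ infer $(r\to r)\to q$; (R2) from $(r\to r)\to(p\to q)$ infer $p\to q$; (R3) from $p\to q$ and $r\to t$ infer $(q\to r)\to(p\to t)$. For $\Gamma\subseteq F(V)$, $\Gamma\vdash q$ means there is a finite sequence ending in $q$ each member of which is an axiom, a member of $\Gamma$, or obtained from earlier members by a rule; $\Gamma^{\vdash}$ is the set of all such $q$. A $\mathrm{q}\L^{*}$-theory is a set $\Theta\subseteq F(V)$ with $\Theta^{\vdash}=\Theta$. The relation $p\sim q$ iff $\vdash p\to q$ and $\vdash q\to p$ (provable from the empty set) is a congruence and $[p]_\sim$ denotes the class of $p$. An MV*-algebra is an algebra $\langle B;\oplus,-,0,1\rangle$ of type $\langle2,1,0,0\rangle$ satisfying for all $x,y,z$: (MV*1) $x\oplus y=y\oplus x$; (MV*2) $(1\oplus x)\oplus(y\oplus(1\oplus z))=((1\oplus x)\oplus y)\oplus(1\oplus z)$; (MV*3) $x\oplus(-x)=0$; (MV*4) $(x\oplus 1)\oplus 1=1$; (MV*5) $x\oplus 0=x$; (MV*6) $-(x\oplus y)=(-x)\oplus(-y)$; (MV*7) $-(-x)=x$; (MV*8) $x\oplus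 y=(x^{+}\oplus y^{+})\oplus(x^{-}\oplus y^{-})$; (MV*9) $(-x\oplus(x\oplus y))^{+}=-(x^{+})\oplus(x^{+}\oplus y^{+})$; (MV*10) $x\vee y=y\vee x$; (MV*11) $x\vee(y\vee z)=(x\vee y)\vee z$; (MV*12) $x\oplus(y\vee z)=(x\oplus y)\vee(x\oplus z)$; where $x^{+}:=1\oplus(-1\oplus x)$, $x^{-}:=-1\oplus(1\oplus x)$, $x\vee y:=(x^{+}\oplus(-x^{+}\oplus y^{+})^{+})\oplus(x^{-}\oplus(-x^{-}\oplus y^{-})^{+})$. Write $y\ominus x:=y\oplus(-x)$. A filter of an MV*-algebra $\mathbf{B}$ is a subset $F\subseteq B$ such that: (F1) $\{x^{+}:x\in B\}\subseteq F$; (F2) if $x\in F$ and $y\ominus x\in F$ then $y\in F$; (F3) if $x\oplus y\in F$ and $t\in B$ then $(x\oplus t)\oplus(y\ominus t)\in F$. *)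

(* Defs.v *)
From Stdlib Require Import ClassicalEpsilon.

(* Formulas F(V): variables p_n (n : nat), constant 1, ->, not, ^+, ^- *)
Inductive form : Type :=
| Var : nat -> form
| One : form
| Imp : form -> form -> form
| Neg : form -> form
| Plus : form -> form
| Minus : form -> form.

Definition Or (p q : form) : form :=
  Imp (Imp (Plus (Imp (Plus p) (Plus q))) (Minus (Neg p)))
      (Imp (Minus (Imp (Minus q) (Minus p))) (Minus p)).

(* Axiom schemas of qL*; A <-> B contributes both A -> B and B -> A. *)
Inductive Axiom_qL : form -> Prop :=
| Q1a p q : Axiom_qL (Imp (Imp p q) (Imp (Neg q) (Neg p)))
| Q1b p q : Axiom_qL (Imp (Imp (Neg q) (Neg p)) (Imp p q))
| Q2a p : Axiom_qL (Imp One (Imp (Imp One p) One))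
| Q2b p : Axiom_qL (Imp (Imp (Imp One p) One) One)
| Q3a p q : Axiom_qL (Imp p (Imp (Imp q q) p))
| Q3b p q : Axiom_qL (Imp (Imp (Imp q q) p) p)
| Q4a p q : Axiom_qL (Imp (Imp p q) (Imp (Imp (Plus q) (Minus p)) (Imp (Plus p) (Minus q))))
| Q4b p q : Axiom_qL (Imp (Imp (Imp (Plus q) (Minus p)) (Imp (Plus p) (Minus q))) (Imp p q))
| Q5a p q : Axiom_qL (Imp (Neg (Imp p q)) (Imp q p))
| Q5b p q : Axiom_qL (Imp (Imp q p) (Neg (Imp p q)))
| Q6a p q : Axiom_qL (Imp (Plus (Imp p (Imp (Neg p) q)))
                          (Imp (Plus p) (Imp (Neg (Plus p)) (Plus q))))
| Q6b p q : Axiom_qL (Imp (Imp (Plus p) (Imp (Neg (Plus p)) (Plus q)))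
                          (Plus (Imp p (Imp (Neg p) q))))
| Q7a p q r : Axiom_qL (Imp (Imp p (Or q r)) (Or (Imp p r) (Imp p q)))
| Q7b p q r : Axiom_qL (Imp (Or (Imp p r) (Imp p q)) (Imp p (Or q r)))
| Q8a p q r : Axiom_qL (Imp (Or p (Or q r)) (Or (Or p q) r))
| Q8b p q r : Axiom_qL (Imp (Or (Or p q) r) (Or p (Or q r)))
| Q9 p q r : Axiom_qL (Imp (Imp (Imp p One) (Imp (Imp q One) r))
                           (Imp (Imp q One) (Imp (Imp p One) r)))
| Q10 p : Axiom_qL (Imp p One)
| Q11a p : Axiom_qL (Imp (Imp (Imp One One) (Plus p)) (Imp (Imp p One) One))
| Q11b p : Axiom_qL (Imp (Imp (Imp p One) One) (Imp (Imp One One) (Plus p)))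
| Q11c p : Axiom_qL (Imp (Imp (Imp One One) (Minus p)) (Imp (Imp p (Neg One)) (Neg One)))
| Q11d p : Axiom_qL (Imp (Imp (Imp p (Neg One)) (Neg One)) (Imp (Imp One One) (Minus p))).

(* Gamma |- q  (inductive closure = existence of a finite derivation) *)
Inductive deriv (Gamma : form -> Prop) : form -> Prop :=
| d_ax p : Axiom_qL p -> deriv Gamma p
| d_hyp p : Gamma p -> deriv Gamma p
| d_R1 p q r : deriv Gamma p -> deriv Gamma (Imp p q) -> deriv Gamma (Imp (Imp r r) q)
| d_R2 p q r : deriv Gamma (Imp (Imp r r) (Imp p q)) -> deriv Gamma (Imp p q)
| d_R3 p q r t : deriv Gamma (Imp p q) -> deriv Gamma (Imp r t) ->
                 deriv Gamma (Imp (Imp q r) (Imp p t)).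

Definition is_theory (Theta : form -> Prop) : Prop :=
  forall q, deriv Theta q <-> Theta q.

Definition empty_set : form -> Prop := fun _ => False.

Definition equiv (p q : form) : Prop :=
  deriv empty_set (Imp p q) /\ deriv empty_set (Imp q p).

Definition cls (p : form) : form -> Prop := fun q => equiv p q.
Definition LT : Type := { S : form -> Prop | exists p, S = cls p }.
Definition cl (p : form) : LT := exist _ (cls p) (ex_intro _ p eq_refl).
Definition repr (x : LT) : form :=
  proj1_sig (constructive_indefinite_description _ (proj2_sig x)).

Definition LT_opp (x : LT) : LT := cl (Neg (repr x)).
Definition LT_oplus (x y : LT) : LT := cl (Imp (Neg (repr x)) (repr y)).
Definition LT_zero : LT := cl (Imp (Var 0) (Var 0)).
Definition LT_one : LT := cl One.

Definition mv_pos {B : Type} (oplus : B -> B -> B) (opp : B -> B) (one : B) (x : B) : B :=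
  oplus one (oplus (opp one) x).
Definition mv_ominus {B : Type} (oplus : B -> B -> B) (opp : B -> B) (y x : B) : B :=
  oplus y (opp x).

Definition is_filter {B : Type} (oplus : B -> B -> B) (opp : B -> B) (zero one : B)
  (F : B -> Prop) : Prop :=
  (forall x, F (mv_pos oplus opp one x)) /\
  (forall x y, F x -> F (mv_ominus oplus opp y x) -> F y) /\
  (forall x y t, F (oplus x y) ->
     F (oplus (oplus x t) (mv_ominus oplus opp y t))).

Definition theta_cls (Theta : form -> Prop) : LT -> Prop :=
  fun x => exists p, Theta p /\ x = cl p.

(* Main.v *)
Require Import Defs.
From Stdlib Require Import ClassicalEpsilon FunctionalExtensionality PropExtensionality ProofIrrelevance.

Section L.
Variable G : form -> Prop.

Lemma d_refl p : deriv G (Imp p p).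
Proof.
  apply (d_R2 G p p (Imp (Imp p p) p)).
  apply d_R3; apply d_ax; constructor.
Qed.

Lemma d_mpi p a b : deriv G p -> deriv G (Imp p (Imp a b)) -> deriv G (Imp a b).
Proof. intros H1 H2. apply (d_R2 G a b One). exact (d_R1 G _ _ One H1 H2). Qed.

Lemma d_trans a b c : deriv G (Imp a b) -> deriv G (Imp b c) -> deriv G (Imp a c).
Proof.
  intros H1 H2. eapply d_mpi. exact H2. apply d_R3. exact H1. apply d_refl.
Qed.

Lemma d_neg a b : deriv G (Imp a b) -> deriv G (Imp (Neg b) (Neg a)).
Proof. intros H. eapply d_mpi. exact H. apply d_ax; constructor. Qed.

Lemma d_imp a a' b b' : deriv G (Imp a' a) -> deriv G (Imp b b') ->
  deriv G (Imp (Imp a b) (Imp a' b')).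
Proof. intros; apply d_R3; auto. Qed.
End L.

Lemma d_mono G p : deriv empty_set p -> deriv G p.
Proof.
  induction 1.
  - now apply d_ax.
  - destruct H.
  - exact (d_R1 G _ _ _ IHderiv1 IHderiv2).
  - exact (d_R2 G _ _ _ IHderiv).
  - apply d_R3; auto.
Qed.

Lemma equiv_refl p : equiv p p.
Proof. split; apply d_refl. Qed.

Lemma exist_eq (S1 S2 : form -> Prop) H1 H2 : S1 = S2 ->
  @exist _ (fun S => exists p, S = cls p) S1 H1 = exist _ S2 H2.
Proof. intros ->. f_equal. apply proof_irrelevance. Qed.

Lemma cl_repr x : cl (repr x) = x.
Proof.
  destruct x as [S HS]. unfold repr, cl; simpl.
  destruct (constructive_indefinite_description _ HS) as [p Hp]; simpl.
  apply exist_eq. auto.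
Qed.

Lemma cl_inj p q : cl p = cl q -> equiv p q.
Proof.
  intros H. assert (E : cls p = cls q) by (apply (f_equal (@proj1_sig _ _) H)).
  assert (cls q q) by apply equiv_refl. rewrite <- E in H0. exact H0.
Qed.

Lemma cl_eq p q : equiv p q -> cl p = cl q.
Proof.
  intros [H1 H2]. apply exist_eq. extensionality r. apply propositional_extensionality.
  unfold cls, equiv; split; intros [A B]; split; eapply d_trans; eauto.
Qed.

Lemma repr_cl p : equiv (repr (cl p)) p.
Proof. apply cl_inj. apply cl_repr. Qed.

Definition T p := deriv empty_set p.

Lemma key p : T (Imp (Neg One) (Imp (Neg (Neg One)) p)).
Proof.
  unfold T.
  apply d_trans with (Imp One (Imp One p)).
  { apply d_trans with (Neg (Imp (Imp One p) One)).
    - apply d_neg. apply d_ax; constructor.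
    - apply d_ax; constructor. }
  apply d_trans with (Imp One p).
  { apply d_trans with (Imp (Imp One One) (Imp One p)).
    - apply d_imp. apply d_ax; constructor. apply d_refl.
    - apply d_ax; constructor. }
  apply d_imp. apply d_ax; constructor. apply d_refl.
Qed.

Theorem proposition5p5 (Theta : form -> Prop) (HT : is_theory Theta) :
  is_filter LT_oplus LT_opp LT_zero LT_one (theta_cls Theta).
Proof.
  set (P := fun q => deriv Theta (Imp (Imp One One) q)).
  assert (inT : forall q, P q -> theta_cls Theta (cl q)).
  { intros q Hq. exists (Imp (Imp One One) q). split.
    - apply HT. exact Hq.
    - apply cl_eq. split; apply d_ax; constructor. }
  assert (outT : forall x q, theta_cls Theta x -> cl q = x -> P q).
  { intros x q [p [Hp ->]] E. apply cl_inj in E. destruct E as [_ E].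
    eapply d_R1. apply HT, Hp. apply d_mono, E. }
  assert (PT : forall q w, P q -> T (Imp q w) -> P w).
  { intros q w H1 H2. eapply d_trans. exact H1. apply d_mono, H2. }
  assert (DP : forall q, deriv Theta q -> P q).
  { intros q H. eapply d_R1. exact H. apply d_refl. }
  assert (PD : forall a b, P (Imp a b) -> deriv Theta (Imp a b)).
  { intros a b H. eapply d_R2. exact H. }
  split; [|split].
  - intros x. unfold mv_pos, LT_oplus, LT_opp, LT_one.
    apply inT. apply DP. apply d_mono.
    set (o := repr (cl One)).
    set (n := repr (cl (Neg o))).
    set (m := repr (cl (Imp (Neg n) (repr x)))).
    pose proof (repr_cl One) as Eo. fold o in Eo.
    pose proof (repr_cl (Neg o)) as En. fold n in En.
    pose proof (repr_cl (Imp (Neg n) (repr x))) as Em. fold m in Em.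
    destruct Eo as [Eo1 Eo2], En as [En1 En2], Em as [Em1 Em2].
    apply d_trans with (Neg One). apply d_neg. exact Eo2.
    apply d_trans with (Imp (Neg (Neg One)) (repr x)). apply key.
    apply d_trans with (Imp (Neg n) (repr x)); [|exact Em2].
    apply d_imp; [|apply d_refl].
    apply d_trans with (Neg (Neg o)). apply d_neg, En2.
    apply d_neg, d_neg, Eo1.
  - intros x y Hx Hyx. unfold mv_ominus, LT_oplus, LT_opp in Hyx.
    set (v := repr (cl (Neg (repr x)))) in Hyx.
    pose proof (repr_cl (Neg (repr x))) as [Ev1 Ev2]. fold v in Ev1, Ev2.
    apply outT with (q := Imp (Neg (repr y)) v) in Hyx; [|reflexivity].
    apply (PT _ (Imp (Neg (repr y)) (Neg (repr x)))) in Hyx.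
    2:{ apply d_imp. apply d_refl. exact Ev1. }
    apply PD in Hyx.
    assert (H1 : deriv Theta (Imp (repr x) (repr y))).
    { eapply d_mpi. exact Hyx. apply d_ax; constructor. }
    assert (H2 : P (repr x)) by (apply (outT x); auto; apply cl_repr).
    rewrite <- (cl_repr y). apply inT. eapply d_trans; eauto.
  - intros x y t H. unfold mv_ominus, LT_oplus, LT_opp in *.
    apply outT with (q := Imp (Neg (repr x)) (repr y)) in H; [|reflexivity].
    apply PD in H.
    set (u := repr (cl (Imp (Neg (repr x)) (repr t)))).
    set (v := repr (cl (Neg (repr t)))).
    set (w := repr (cl (Imp (Neg (repr y)) v))).
    pose proof (repr_cl (Imp (Neg (repr x)) (repr t))) as [Eu1 Eu2]. fold u in Eu1, Eu2.
    pose proof (repr_cl (Neg (repr t))) as [Ev1 Ev2]. fold v in Ev1, Ev2.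
    pose proof (repr_cl (Imp (Neg (repr y)) v)) as [Ew1 Ew2]. fold w in Ew1, Ew2.
    apply inT. apply DP.
    apply d_trans with (Imp (repr t) (Neg (repr x))).
    { apply d_mono. apply d_trans with (Neg (Imp (Neg (repr x)) (repr t))).
      apply d_neg, Eu2. apply d_ax; constructor. }
    apply d_trans with (Imp (Neg (repr y)) (Neg (repr t))).
    { apply d_trans with (Imp (Neg (Neg (repr x))) (Neg (repr t))).
      apply d_ax; constructor.
      apply d_imp. apply d_neg, H. apply d_refl. }
    apply d_mono. apply d_trans with (Imp (Neg (repr y)) v); [|exact Ew2].
    apply d_imp. apply d_refl. exact Ev2.
Qed.
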